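(* In the session calculus, strong fairness of groups of components (SG) coincides with strong fairness of components (SC), i.e. a path is SG-fair iff it is SC-fair. Moreover, weak fairness of groups of components (WG) is weaker than weak fairness of components (WC): every WC-fair path is WG-fair.
   Context: Session calculus: threads $P ::= \mathbf{end} \mid \bigoplus_{i\in I} p_i!\lambda_i;P_i \mid \sum_{i\in I} p_i?\lambda_i;P_i \mid X \mid \mu X.P$ (guarded recursion), thread states additionally $\langle q!\lambda\rangle;P$; networks $p[\![P]\!]\mid 0\mid N\parallel N$ with distinct locations and closed threads, modulo associativity/commutativity/unit. Transitions: (choice) $p[\![\bigoplus_{i\in I}p_i!\lambda_i;P_i]\!]\parallel N \xrightarrow{\tau} p[\![\langle p_k!\lambda_k\rangle;P_k]\!]\parallel N$; (unfold) $p[\![\mu X.P]\!]\parallel N\xrightarrow{\tau} p[\![P\{\mu X.P/X\}]\!]\parallel N$; (comm) $p_k[\![\langle q!\lambda_k\rangle;Q]\!]\parallel q[\![\sum_{i\in I}p_i?\lambda_i;P_i]\!]\parallel N \xrightarrow{(p_k,\lambda_k,q)} p_k[\![Q]\!]\parallel q[\![P_k]\!]\parallel N$. $\mathrm{comp}(t)$ is the moving location for a $\tau$-transition and $\{p,q\}$ for label $(p,\lambda,q)$. A path is a network state with a maximal sequence of transitions. For a notion of task (with ''enabled in a state'' and ''engaged in by a path''): a task is relentlessly enabled on a path if every suffix contains a state where it is enabled, perpetually enabled if enabled in every state; a path $\pi$ is strongly fair if for every suffix $\pi'$ each task relentlessly enabled on $\pi'$ is engaged in by $\pi'$, and weakly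 fair if for every suffix $\pi'$ each task perpetually enabled on $\pi'$ is engaged in by $\pi'$. Components (SC/WC): tasks are locations $p$; enabled in $N$ if some transition $t$ from $N$ has $p\in\mathrm{comp}(t)$; engaged in if the path contains $t$ with $p\in\mathrm{comp}(t)$. Groups of components (SG/WG): tasks are sets $G$ of locations; enabled in $N$ if some transition $t$ from $N$ has $\mathrm{comp}(t)=G$; engaged in if the path contains $t$ with $\mathrm{comp}(t)=G$. *)

(* Defs.v *)
From Stdlib Require Import List Arith.
Import ListNotations.

Definition loc := nat.
Definition label := nat.
Definition rvar := nat.

(* Threads:  end | (+)_i p_i!l_i;P_i | Sum_i p_i?l_i;P_i | X | mu X.P
   Branches over a finite index set I are given as lists. *)
Inductive thread : Type :=
| TEnd
| TSend (br : list (loc * label * thread))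
| TRecv (br : list (loc * label * thread))
| TVar (X : rvar)
| TMu (X : rvar) (P : thread).

(* Thread states: a thread, or <q!l>;P after a choice has been made. *)
Inductive tstate : Type :=
| TS (P : thread)
| TOut (q : loc) (l : label) (P : thread).

(* Substitution P{Q/X} (Q is closed in all uses, so no capture). *)
Fixpoint subst (X : rvar) (Q P : thread) : thread :=
  match P with
  | TEnd => TEnd
  | TSend br => TSend (map (fun b => (fst b, subst X Q (snd b))) br)
  | TRecv br => TRecv (map (fun b => (fst b, subst X Q (snd b))) br)
  | TVar Y => if Nat.eqb Y X then Q else TVar Y
  | TMu Y P' => if Nat.eqb Y X then TMu Y P' else TMu Y (subst X Q P')
  end.

Fixpoint closed_in (bnd : list rvar) (P : thread) : Prop :=
  match P with
  | TEnd => True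
  | TSend br => fold_right (fun b acc => closed_in bnd (snd b) /\ acc) True br
  | TRecv br => fold_right (fun b acc => closed_in bnd (snd b) /\ acc) True br
  | TVar Y => In Y bnd
  | TMu Y P' => closed_in (Y :: bnd) P'
  end.

Definition closed (P : thread) : Prop := closed_in [] P.

Fixpoint unguarded (X : rvar) (P : thread) : Prop :=
  match P with
  | TVar Y => Y = X
  | TMu Y P' => Y <> X /\ unguarded X P'
  | _ => False
  end.

Fixpoint guarded (P : thread) : Prop :=
  match P with
  | TEnd => True
  | TSend br => fold_right (fun b acc => guarded (snd b) /\ acc) True br
  | TRecv br => fold_right (fun b acc => guarded (snd b) /\ acc) True br
  | TVar _ => True
  | TMu X P' => ~ unguarded X P' /\ guarded P'
  end.

Definition wf_thread (P : thread) : Prop := closed P /\ guarded P.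

Definition wf_tstate (s : tstate) : Prop :=
  match s with
  | TS P => wf_thread P
  | TOut _ _ P => wf_thread P
  end.

(* Networks: finite partial maps from locations to thread states
   (this representation builds in distinct locations and the
   associativity/commutativity/unit laws of parallel composition). *)
Definition net := loc -> option tstate.

Definition wf_net (N : net) : Prop :=
  (exists L : list loc, forall x, N x <> None -> In x L) /\
  (forall x s, N x = Some s -> wf_tstate s).

Definition upd (N : net) (p : loc) (v : option tstate) : net :=
  fun x => if Nat.eqb x p then v else N x.

(* Transition labels: tau (recording its moving location) or (p,l,q). *)
Inductive act : Type :=
| ATau (p : loc)
| AComm (p : loc) (l : label) (q : loc).

Definition comp (t : act) : loc -> Prop :=
  match t with
  | ATau p => fun x => x = p
  | AComm p _ q => fun x => x = p \/ x = q
  end.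

Inductive step : net -> act -> net -> Prop :=
| st_choice (N N' : net) (p : loc) br q l P :
    N p = Some (TS (TSend br)) -> In (q, l, P) br ->
    (forall x, N' x = upd N p (Some (TOut q l P)) x) ->
    step N (ATau p) N'
| st_unfold (N N' : net) (p : loc) X P :
    N p = Some (TS (TMu X P)) ->
    (forall x, N' x = upd N p (Some (TS (subst X (TMu X P) P))) x) ->
    step N (ATau p) N'
| st_comm (N N' : net) (p q : loc) l Q br P :
    N p = Some (TOut q l Q) -> N q = Some (TS (TRecv br)) ->
    In (p, l, P) br ->
    (forall x, N' x = upd (upd N p (Some (TS Q))) q (Some (TS P)) x) ->
    step N (AComm p l q) N'.

(* Paths: a state sequence with transition labels; either infinite
   (plen = None) or of finite length n ending in a state with no
   transition (maximality). *)
Record path : Type := {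
  pst : nat -> net;
  pact : nat -> act;
  plen : option nat }.

Definition state_in (pi : path) (j : nat) : Prop :=
  match plen pi with Some n => j <= n | None => True end.

Definition trans_in (pi : path) (j : nat) : Prop :=
  match plen pi with Some n => j < n | None => True end.

Definition valid_path (pi : path) : Prop :=
  wf_net (pst pi 0) /\
  (forall i, trans_in pi i -> step (pst pi i) (pact pi i) (pst pi (S i))) /\
  (forall n, plen pi = Some n -> forall t N', ~ step (pst pi n) t N').

(* Generic fairness for a notion of task. The suffix of pi from
   position k consists of states j >= k and transitions j >= k. *)
Section Fairness.
Variable Task : Type.
Variable enabled : Task -> net -> Prop.
Variable engages : Task -> act -> Prop.

Definition relentlessly_enabled (pi : path) (k : nat) (T : Task) : Prop :=
  forall k', k <= k' -> state_in pi k' ->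
    exists j, k' <= j /\ state_in pi j /\ enabled T (pst pi j).

Definition perpetually_enabled (pi : path) (k : nat) (T : Task) : Prop :=
  forall j, k <= j -> state_in pi j -> enabled T (pst pi j).

Definition engaged_in (pi : path) (k : nat) (T : Task) : Prop :=
  exists j, k <= j /\ trans_in pi j /\ engages T (pact pi j).

Definition strongly_fair (pi : path) : Prop :=
  forall k, state_in pi k -> forall T,
    relentlessly_enabled pi k T -> engaged_in pi k T.

Definition weakly_fair (pi : path) : Prop :=
  forall k, state_in pi k -> forall T,
    perpetually_enabled pi k T -> engaged_in pi k T.
End Fairness.

Definition enabled_C (p : loc) (N : net) : Prop :=
  exists t N', step N t N' /\ comp t p.
Definition engages_C (p : loc) (t : act) : Prop := comp t p.

Definition same_set (A B : loc -> Prop) : Prop := forall x, A x <-> B x.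
Definition enabled_G (G : loc -> Prop) (N : net) : Prop :=
  exists t N', step N t N' /\ same_set (comp t) G.
Definition engages_G (G : loc -> Prop) (t : act) : Prop := same_set (comp t) G.

Definition SC_fair := strongly_fair loc enabled_C engages_C.
Definition WC_fair := weakly_fair loc enabled_C engages_C.
Definition SG_fair := strongly_fair (loc -> Prop) enabled_G engages_G.
Definition WG_fair := weakly_fair (loc -> Prop) enabled_G engages_G.

(* Main.v *)
Require Import Defs.
From Stdlib Require Import List Arith Lia Classical Wf_nat.

Lemma st_S pi i : state_in pi (S i) -> trans_in pi i.
Proof. unfold state_in, trans_in; destruct (plen pi); lia. Qed.
Lemma tr_st pi i : trans_in pi i -> state_in pi i.
Proof. unfold state_in, trans_in; destruct (plen pi); lia. Qed.
Lemma tr_le pi i j : trans_in pi j -> i <= j -> trans_in pi i.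
Proof. unfold trans_in; destruct (plen pi); lia. Qed.
Lemma st_le pi i j : state_in pi j -> i <= j -> state_in pi i.
Proof. unfold state_in; destruct (plen pi); lia. Qed.

Lemma step_pres N t N' x : step N t N' -> ~ comp t x -> N' x = N x.
Proof.
  intros H Hc; destruct H; simpl in Hc; rewrite H1 || rewrite H0 || rewrite H2;
  unfold upd; repeat match goal with |- context [Nat.eqb ?a ?b] =>
    destruct (Nat.eqb_spec a b) end; tauto.
Qed.

Lemma step_tau_form N t N' a :
  step N t N' ->
  (exists br, N a = Some (TS (TSend br))) \/ (exists X P, N a = Some (TS (TMu X P))) ->
  comp t a -> t = ATau a.
Proof.
  intros H Ha Hc; destruct H; simpl in Hc.
  - subst; auto.
  - subst; auto.
  - destruct Ha as [[br' E]|[X [P' E]]]; destruct Hc; subst; congruence.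
Qed.

Lemma step_out_form N t N' a q l Q :
  step N t N' -> N a = Some (TOut q l Q) ->
  comp t a -> exists l', t = AComm a l' q.
Proof.
  intros H Ha Hc; destruct H; simpl in Hc.
  - subst; congruence.
  - subst; congruence.
  - destruct Hc; subst.
    + rewrite Ha in H; inversion H; subst; eauto.
    + congruence.
Qed.

Lemma frozen pi j b a : valid_path pi ->
  (forall i, j <= i -> i < b -> trans_in pi i -> pst pi i a = pst pi j a ->
     ~ comp (pact pi i) a) ->
  forall i, j <= i -> i <= b -> state_in pi i -> pst pi i a = pst pi j a.
Proof.
  intros [_ [Hv _]] H. induction i; intros Hji Hib Hs.
  - assert (j = 0) by lia; subst; auto.
  - destruct (Nat.eq_dec j (S i)) as [E|E]; [subst; auto|].
    assert (Ht := st_S _ _ Hs).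
    assert (IH := IHi ltac:(lia) ltac:(lia) (tr_st _ _ Ht)).
    rewrite (step_pres _ _ _ _ (Hv i Ht)); auto.
    apply H; auto; lia.
Qed.

Lemma first_eng pi j a :
  (exists m, j <= m /\ trans_in pi m /\ comp (pact pi m) a) ->
  exists m, j <= m /\ trans_in pi m /\ comp (pact pi m) a /\
    forall i, j <= i -> i < m -> ~ comp (pact pi i) a.
Proof.
  intros [m0 Hm0]. apply NNPP; intro Hno.
  assert (forall m, ~ (j <= m /\ trans_in pi m /\ comp (pact pi m) a)).
  { intro m; induction m as [m IH] using lt_wf_ind. intros [H1 [H2 H3]].
    apply Hno; exists m; repeat split; auto.
    intros i Hi Him Hc. apply (IH i Him); repeat split; auto.
    eapply tr_le; eauto; lia. }
  eapply H; eauto.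
Qed.

Definition actor (t : act) : loc := match t with ATau p => p | AComm p _ _ => p end.
Lemma actor_comp t : comp t (actor t).
Proof. destruct t; simpl; auto. Qed.

Lemma key pi j t N' : valid_path pi -> state_in pi j ->
  step (pst pi j) t N' ->
  (exists m, j <= m /\ trans_in pi m /\ comp (pact pi m) (actor t)) ->
  exists m, j <= m /\ trans_in pi m /\ same_set (comp (pact pi m)) (comp t).
Proof.
  intros Hv Hs Hst He. destruct (first_eng _ _ _ He) as [m [Hjm [Htm [Hc Hmin]]]].
  assert (Hfr : pst pi m (actor t) = pst pi j (actor t)).
  { eapply (frozen pi j m); [exact Hv| |exact Hjm|exact (le_n m)|exact (tr_st _ _ Htm)].
    intros i H1 H2 _ _; apply Hmin; auto. }
  assert (Hsm := proj1 (proj2 Hv) m Htm).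
  exists m; split; auto; split; auto.
  destruct Hst; simpl in *.
  - rewrite (step_tau_form _ _ _ _ Hsm) by (auto; left; rewrite Hfr; eauto).
    intro x; simpl; tauto.
  - rewrite (step_tau_form _ _ _ _ Hsm) by (auto; right; rewrite Hfr; eauto).
    intro x; simpl; tauto.
  - rewrite <- Hfr in H. destruct (step_out_form _ _ _ _ _ _ _ Hsm H Hc) as [l' E].
    rewrite E; intro x; simpl; tauto.
Qed.

Lemma rebuild_tau N N' p M : step N (ATau p) N' -> M p = N p ->
  exists M', step M (ATau p) M'.
Proof.
  intros H E; inversion H; subst.
  - eexists; eapply st_choice; [rewrite E; eauto | eauto | intro; reflexivity].
  - eexists; eapply st_unfold; [rewrite E; eauto | intro; reflexivity].
Qed.

Lemma rebuild_comm N N' r l p M : step N (AComm r l p) N' -> M r = N r -> M p = N p ->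
  exists M', step M (AComm r l p) M'.
Proof.
  intros H E1 E2; inversion H; subst.
  eexists; eapply st_comm; [rewrite E1; eauto | rewrite E2; eauto | eauto | intro; reflexivity].
Qed.

Lemma perp_rel T en pi k G : perpetually_enabled T en pi k G ->
  relentlessly_enabled T en pi k G.
Proof. intros H k' Hk' Hs; exists k'; repeat split; auto. Qed.

Lemma SC_SG pi : valid_path pi -> SC_fair pi -> SG_fair pi.
Proof.
  intros Hv HSC k Hk G Hrel.
  destruct (Hrel k (le_n k) Hk) as [j [Hkj [Hsj [t [N' [Hst Hsame]]]]]].
  assert (Ha : engaged_in loc engages_C pi j (actor t)).
  { apply HSC; auto. intros k' Hk' Hs'.
    destruct (Hrel k' ltac:(lia) Hs') as [j' [H1 [H2 [t' [N'' [H3 H4]]]]]].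
    exists j'; repeat split; auto. exists t', N''; split; auto.
    apply H4, Hsame, actor_comp. }
  destruct (key pi j t N' Hv Hsj Hst Ha) as [m [H1 [H2 H3]]].
  exists m; split; [lia|split; auto]. intro x; rewrite (H3 x); apply Hsame.
Qed.

Lemma WC_WG pi : valid_path pi -> WC_fair pi -> WG_fair pi.
Proof.
  intros Hv HWC k Hk G Hper.
  destruct (Hper k (le_n k) Hk) as [t [N' [Hst Hsame]]].
  assert (Ha : engaged_in loc engages_C pi k (actor t)).
  { apply HWC; auto. intros k' Hk' Hs'.
    destruct (Hper k' Hk' Hs') as [t' [N'' [H3 H4]]].
    exists t', N''; split; auto.
    apply H4, Hsame, actor_comp. }
  destruct (key pi k t N' Hv Hk Hst Ha) as [m [H1 [H2 H3]]].
  exists m; split; [lia|split; auto]. intro x; rewrite (H3 x); apply Hsame.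
Qed.

Lemma comm_inv N r l q N' : step N (AComm r l q) N' -> exists Q, N r = Some (TOut q l Q).
Proof. intro H; inversion H; subst; eauto. Qed.

Lemma SG_SC pi : valid_path pi -> SG_fair pi -> SC_fair pi.
Proof.
  intros Hv HSG k Hk p Hrel. apply NNPP; intro Hne.
  assert (Hfr : forall i, k <= i -> state_in pi i -> pst pi i p = pst pi k p).
  { intros i Hi Hs. apply (frozen pi k i p Hv); auto.
    intros i' H1 H2 H3 _ Hc. apply Hne; exists i'; auto. }
  destruct (Hrel k (le_n k) Hk) as [j [Hkj [Hsj [t [N' [Hst Hc]]]]]].
  destruct t as [p0 | r l q]; simpl in Hc.
  - subst p0.
    assert (Hp : perpetually_enabled (loc -> Prop) enabled_G pi j (comp (ATau p))).
    { intros i Hi Hs. destruct (rebuild_tau _ _ _ (pst pi i) Hst) as [M' HM].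
      rewrite (Hfr i), (Hfr j); auto; lia.
      exists (ATau p), M'; split; auto. intro; tauto. }
    destruct (HSG j Hsj _ (perp_rel _ _ _ _ _ Hp)) as [m [H1 [H2 H3]]].
    apply Hne; exists m; repeat split; auto; try lia. apply H3; simpl; auto.
  - destruct Hc as [E|E]; [subst r|subst q].
    + destruct (comm_inv _ _ _ _ _ Hst) as [Q HQ].
      assert (Hr : relentlessly_enabled (loc -> Prop) enabled_G pi k (comp (AComm p l q))).
      { intros k' Hk' Hs'.
        destruct (Hrel k' Hk' Hs') as [j' [H1 [H2 [t' [N'' [H3 H4]]]]]].
        exists j'; repeat split; auto. exists t', N''; split; auto.
        assert (Ej : pst pi j' p = Some (TOut q l Q)).
        { rewrite (Hfr j'), <- (Hfr j); auto; lia. }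
        destruct (step_out_form _ _ _ _ _ _ _ H3 Ej H4) as [l' El]; subst.
        intro x; simpl; tauto. }
      destruct (HSG k Hk _ Hr) as [m [H1 [H2 H3]]].
      apply Hne; exists m; repeat split; auto. apply H3; simpl; auto.
    + destruct (comm_inv _ _ _ _ _ Hst) as [Q HQ].
      assert (Hfr2 : forall i, j <= i -> state_in pi i -> pst pi i r = pst pi j r).
      { intros i Hi Hs. apply (frozen pi j i r Hv); auto.
        intros i' H1 H2 H3 E' Hc. rewrite HQ in E'.
        destruct (step_out_form _ _ _ _ _ _ _ (proj1 (proj2 Hv) i' H3) E' Hc) as [l' El].
        apply Hne; exists i'; rewrite El; simpl; repeat split; auto; lia. }
      assert (Hp : perpetually_enabled (loc -> Prop) enabled_G pi j (comp (AComm r l p))).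
      { intros i Hi Hs. destruct (rebuild_comm _ _ _ _ _ (pst pi i) Hst) as [M' HM].
        apply Hfr2; auto.
        rewrite (Hfr i), (Hfr j); auto; lia.
        exists (AComm r l p), M'; split; auto. intro; tauto. }
      destruct (HSG j Hsj _ (perp_rel _ _ _ _ _ Hp)) as [m [H1 [H2 H3]]].
      apply Hne; exists m; repeat split; auto; try lia. apply H3; simpl; auto.
Qed.

Theorem mainTheorem12 : forall pi : path, valid_path pi ->
  (SG_fair pi <-> SC_fair pi) /\ (WC_fair pi -> WG_fair pi).
Proof.
  intros pi Hv; split; [split|]; eauto using SG_SC, SC_SG, WC_WG.
Qed.
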